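(* Let $p,q\ge 1$ and let $P(p,q)$ be the parallelogram hexagonal system with $p$ rows of $q$ hexagons each, so it has $n=pq$ hexagons. Then $cf(P(p,q))=pq+1=n+1$.
   Context: A hexagonal system (HS) is a finite 2-connected plane graph in which every interior face is a regular hexagon of the hexagonal lattice; it is drawn with some edges vertical, so that hexagons form horizontal rows in which consecutive hexagons share a vertical edge. $P(p,q)$ consists of $p$ horizontal rows, each a linear chain of $q$ hexagons, where each row lies directly above the previous one shifted half a hexagon to the right (so hexagon $j$ of row $i+1$ shares edges with hexagons $j$ and $j+1$ of row $i$ when they exist); it is a parallelogram (rhombus-shaped) benzenoid. In particular $P(1,q)$ is the linear hexagonal chain of $q$ hexagons. For a perfect matching $M$, a forcing set of $M$ is a subset of $M$ contained in no other perfect matching; a complete forcing set of $G$ is a set $S\subseteq E(G)$ with $S\cap M$ a forcing set of $M$ for every perfect matching $M$; $cf(G)$ is the minimum size of a complete forcing set. *)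

(* Defs.v *)
From mathcomp Require Import all_boot.
Set Implicit Arguments. Unset Strict Implicit. Unset Printing Implicit Defensive.

Section Matchings.
Variable T : finType.
Variables (V : {set T}) (E : {set {set T}}).

Definition perfect_matching (M : {set {set T}}) : Prop :=
  M \subset E /\ forall v, v \in V -> #|[set e in M | v \in e]| = 1.

Definition forcing_set (M S : {set {set T}}) : Prop :=
  S \subset M /\
  forall M', perfect_matching M' -> S \subset M' -> M' = M.

Definition complete_forcing_set (S : {set {set T}}) : Prop :=
  S \subset E /\
  forall M, perfect_matching M -> forcing_set M (S :&: M).

Definition cf_is (k : nat) : Prop :=
  (exists S, complete_forcing_set S /\ #|S| = k) /\
  (forall S, complete_forcing_set S -> k <= #|S|).

End Matchings.

(* ---------- The parallelogram hexagonal system P(p,q) ----------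
   Brick-wall model of the hexagonal lattice: lattice points (x,y); the
   hexagon with lower-left corner (x0,y0) has vertices (x0+a, y0+b),
   a in {0,1,2}, b in {0,1}, horizontal edges (x0+a,y0+b)-(x0+a+1,y0+b)
   (a in {0,1}) and vertical edges (x0,y0)-(x0,y0+1), (x0+2,y0)-(x0+2,y0+1).
   Hexagon j (0 <= j < q) of row i (0 <= i < p) has lower-left corner
   (2j + i, i): consecutive hexagons of a row share a vertical edge, and row
   i+1 is shifted half a hexagon (one unit) to the right, so hexagon j of
   row i+1 shares a horizontal edge with hexagons j and j+1 of row i. *)

Definition PV (p q : nat) : finType := ('I_(2 * q + p).+1 * 'I_p.+1)%type.

Definition pt (p q x y : nat) : PV p q := (inord x, inord y).

Definition hex_edges (p q i j : nat) : {set {set PV p q}} :=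
  let x0 := 2 * j + i in
  let y0 := i in
  [set [set pt p q x0 y0; pt p q x0.+1 y0];
       [set pt p q x0.+1 y0; pt p q x0.+2 y0];
       [set pt p q x0 y0.+1; pt p q x0.+1 y0.+1];
       [set pt p q x0.+1 y0.+1; pt p q x0.+2 y0.+1];
       [set pt p q x0 y0; pt p q x0 y0.+1];
       [set pt p q x0.+2 y0; pt p q x0.+2 y0.+1]].

Definition PE (p q : nat) : {set {set PV p q}} :=
  \bigcup_(i < p) \bigcup_(j < q) hex_edges p q i j.

Definition PVs (p q : nat) : {set PV p q} := \bigcup_(e in PE p q) e.

(* Main.v *)
Require Import Defs.
From HB Require Import structures.
From mathcomp Require Import all_boot zify.
Set Warnings "-notation-overridden -redundant-canonical-projection".
Set Implicit Arguments. Unset Strict Implicit. Unset Printing Implicit Defensive.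

Inductive lab := LA of nat & nat | LB of nat & nat | LV of nat & nat.
Definition lab_eqb (l l' : lab) : bool :=
  match l, l' with
  | LA y m, LA y' m' => (y == y') && (m == m')
  | LB y m, LB y' m' => (y == y') && (m == m')
  | LV y m, LV y' m' => (y == y') && (m == m')
  | _, _ => false
  end.
Lemma lab_eqP : Equality.axiom lab_eqb.
Proof.
by case=> y m [] y' m' /=; apply: (iffP idP) => // [/andP[/eqP-> /eqP->]|[-> ->]] //;
  rewrite !eqxx.
Qed.
HB.instance Definition _ := hasDecEq.Build lab lab_eqP.
Lemma labeqE (l l' : lab) : (l == l') = lab_eqb l l'. Proof. by []. Qed.

Lemma sum_eqb b m : \sum_(0 <= i < m) (i == b) = (b < m).
Proof.
elim: m => [|m IH]; first by rewrite big_geq.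
rewrite big_nat_recr //= IH; lia.
Qed.

Lemma line_lemma (a q0 : nat) (hA hB vd vu : nat -> bool) :
  a <= q0 -> (forall m, m <= q0 -> vd m = (m == a)) -> hB q0 = false ->
  (forall m, m <= q0 -> ((0 < m) && hB m.-1) + hA m + vd m = 1) ->
  (forall m, m <= q0 -> hA m + hB m + vu m = 1) ->
  exists b, [/\ a <= b <= q0, (forall m, m <= q0 -> vu m = (m == b)),
     (forall m, m <= q0 -> hA m = (m < a) || (b < m)) &
     (forall m, m <= q0 -> hB m = (a <= m) && (m < b))].
Proof.
move=> aq hvd hBq eO eE.
pose c m := (0 < m) && hB m.-1.
pose S m := \sum_(0 <= i < m) vu i.
have inv : forall m, m <= q0.+1 -> c m + S m = (a < m).
  elim=> [|m IH] hm; first by rewrite /c /S big_geq.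
  have := IH (ltnW hm); have := eO m hm; have := eE m hm; have := hvd m hm.
  rewrite /c /S big_nat_recr //= -/(S m); lia.
have Smono : forall m n, m <= n -> S m <= S n.
  move=> m n mn; rewrite /S (big_cat_nat (leq0n m) mn) /=; exact: leq_addr.
have Sq : S q0.+1 = 1.
  by have := inv q0.+1 (leqnn _); rewrite /c /= hBq; lia.
have exP : exists m, (m <= q0) && vu m.
  case: (pickP (fun i : 'I_q0.+1 => vu i)) => [i hi|none].
    by exists i; rewrite hi -ltnS ltn_ord.
  exfalso; move: Sq; rewrite /S big_nat big1 // => i /andP[_ hi].
  by have /= -> := none (Ordinal hi).
case: (ex_minnP exP) => b /andP[hbq hvb] hmin.
have Ssucc : forall m, S m.+1 = S m + vu m.
  by move=> m; rewrite /S big_nat_recr.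
have vuE : forall m, m <= q0 -> vu m = (m == b).
  move=> m hm; case: (ltngtP m b) => hmb.
  - apply/negP => hv; have := hmin m; rewrite hm hv => /(_ isT); lia.
  - have h1 := Smono _ _ hmb; have h2 := Ssucc b; have h3 := Ssucc m.
    have := inv m.+1; rewrite ltnS => /(_ hm); rewrite /c /=.
    rewrite hvb in h2; lia.
  - by rewrite hmb hvb ?eqxx.

have SE : forall m, m <= q0.+1 -> S m = (b < m).
  move=> m hm; rewrite /S -(sum_eqb b m); apply: eq_big_nat => i /andP[_ hi].
  by rewrite vuE //; lia.
have ab : a <= b.
  have := inv a; rewrite SE; lia.
exists b; split => //; first by rewrite ab.
- move=> m hm; have := eO m hm; have := inv m; have := hvd m hm.
  rewrite SE /c; case: m hm => [|m] hm /=; lia.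
- move=> m hm; have := inv m.+1; rewrite SE /c //=; lia.
Qed.

Lemma sum_sel n (b : nat) : \sum_(i < n) i * (i == b :> nat) = if b < n then b else 0.
Proof.
elim: n => [|n IH]; first by rewrite big_ord0.
rewrite big_ord_recr /= IH; case: ifP => h1; case: ifP => h2; lia.
Qed.

Section Hex.
Variables p q : nat.
Hypothesis hp : 0 < p.
Hypothesis hq : 0 < q.

Local Notation T := (PV p q).
Definition Ev (y m : nat) : T := pt p q (y + 2 * m) y.
Definition Ov (y m : nat) : T := pt p q (y + 2 * m - 1) y.

Lemma pt_inj x y x' y' : x <= 2 * q + p -> y <= p -> x' <= 2 * q + p -> y' <= p ->
  pt p q x y = pt p q x' y' -> x = x' /\ y = y'.
Proof.
move=> hx hy hx' hy' /(congr1 (fun v : T => (val v.1, val v.2))) /=.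
rewrite !inordK ?ltnS // => -[-> ->]; by [].
Qed.



Lemma pt_eqE x y x' y' : x <= 2 * q + p -> y <= p -> x' <= 2 * q + p -> y' <= p ->
  (pt p q x y == pt p q x' y') = (x == x') && (y == y').
Proof.
move=> hx hy hx' hy'; apply/eqP/andP => [/pt_inj|[/eqP-> /eqP->]] //.
by case/(_ hx hy hx' hy') => -> ->.
Qed.

Definition enc (l : lab) : {set T} :=
  match l with
  | LA y m => [set Ov y m; Ev y m]
  | LB y m => [set Ev y m; Ov y m.+1]
  | LV y m => [set Ev y m; Ov y.+1 m]
  end.

Definition valid (l : lab) : bool :=
  match l with
  | LA y m => [&& y <= p, m <= q, (y != 0) || (m != 0) & (y != p) || (m != q)]
  | LB y m => (y <= p) && (m < q)
  | LV y m => (y < p) && (m <= q)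
  end.

Definition vE y m := [&& y <= p, m <= q & (y != p) || (m != q)].
Definition vO y m := [&& y <= p, m <= q & (y != 0) || (m != 0)].

Lemma Ev_in_enc l y m : valid l -> vE y m ->
  (Ev y m \in enc l) = (l \in [:: LA y m; LB y m; LV y m]).
Proof.
case: l => y' m' /= hv hE; rewrite !inE /Ev /Ov /vE in hE *;
  rewrite !labeqE /= !pt_eqE; lia.
Qed.

Definition candO y m : seq lab :=
  LA y m :: (if m is m'.+1 then [:: LB y m'] else [::]) ++
            (if y is y'.+1 then [:: LV y' m] else [::]).

Lemma Ov_in_enc l y m : valid l -> vO y m ->
  (Ov y m \in enc l) = (l \in candO y m).
Proof.
case: l => y' m' /= hv hO; rewrite !inE /Ev /Ov /vO in hO *;
  case: m hO => [|m] hO; case: y hO => [|y] hO /=; rewrite ?inE ?labeqE /= !pt_eqE; lia.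
Qed.


Lemma hexE i j : hex_edges p q i j =
  [set enc (LB i j); enc (LA i j.+1); enc (LA i.+1 j); enc (LB i.+1 j);
       enc (LV i j); enc (LV i j.+1)].
Proof.
rewrite /hex_edges /enc /Ev /Ov.
have e1 : i + 2 * j = 2 * j + i by lia.
have e2 : i + 2 * j.+1 - 1 = (2 * j + i).+1 by lia.
have e3 : i + 2 * j.+1 = (2 * j + i).+2 by lia.
have e4 : i.+1 + 2 * j - 1 = 2 * j + i by lia.
have e5 : i.+1 + 2 * j = (2 * j + i).+1 by lia.
have e6 : i.+1 + 2 * j.+1 - 1 = (2 * j + i).+2 by lia.
by rewrite e1 e2 e3 e4 e5 e6.
Qed.

Lemma PE_enc e : e \in PE p q <-> exists l, valid l /\ e = enc l.
Proof.
split.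
  case/bigcupP=> i _ /bigcupP[j _]; rewrite hexE !inE.
  have hi := ltn_ord i; have hj := ltn_ord j.
  move/orP=> [/orP[/orP[/orP[/orP[/eqP->|/eqP->]|/eqP->]|/eqP->]|/eqP->]|/eqP->]; [exists (LB i j)|exists (LA i j.+1)|exists (LA i.+1 j)
    |exists (LB i.+1 j)|exists (LV i j)|exists (LV i j.+1)]; split=> //=; lia.
case=> l [hv ->]; apply/bigcupP.
case: l hv => y m /= hv.
- case: (boolP ((y < p) && (0 < m))) => h.
    have hi : y < p by lia.
    exists (Ordinal hi) => //; apply/bigcupP.
    have hj : m.-1 < q by lia.
    exists (Ordinal hj) => //; rewrite hexE /= !inE.
    by rewrite (_ : m.-1.+1 = m) ?eqxx ?orbT //; lia.
  have hi : y.-1 < p by lia.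
  exists (Ordinal hi) => //; apply/bigcupP.
  have hj : m < q by lia.
  exists (Ordinal hj) => //; rewrite hexE /= !inE.
  by rewrite (_ : y.-1.+1 = y) ?eqxx ?orbT //; lia.
- case: (ltnP y p) => h.
    exists (Ordinal h) => //; apply/bigcupP.
    have hj : m < q by lia.
    by exists (Ordinal hj) => //; rewrite hexE /= !inE eqxx.
  have hi : p.-1 < p by lia.
  exists (Ordinal hi) => //; apply/bigcupP.
  have hj : m < q by lia.
  exists (Ordinal hj) => //; rewrite hexE /= !inE.
  by rewrite (_ : p.-1.+1 = y) ?eqxx ?orbT //; lia.
- have hi : y < p by lia.
  exists (Ordinal hi) => //; apply/bigcupP.
  case: (ltnP m q) => h.
    by exists (Ordinal h) => //; rewrite hexE /= !inE eqxx ?orbT.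
  have hj : q.-1 < q by lia.
  exists (Ordinal hj) => //; rewrite hexE /= !inE.
  by rewrite (_ : q.-1.+1 = m) ?eqxx ?orbT //; lia.
Qed.

Lemma PVs_char v : v \in PVs p q <->
  (exists y m, vE y m /\ v = Ev y m) \/ (exists y m, vO y m /\ v = Ov y m).
Proof.
split.
  case/bigcupP=> e /PE_enc[l [hv ->]].
  case: l hv => y m /= hv; rewrite !inE => /orP[]/eqP->.
  - by right; exists y, m; rewrite /vO; split=> //; lia.
  - by left; exists y, m; rewrite /vE; split=> //; lia.
  - by left; exists y, m; rewrite /vE; split=> //; lia.
  - by right; exists y, m.+1; rewrite /vO; split=> //; lia.
  - by left; exists y, m; rewrite /vE; split=> //; lia.
  - by right; exists y.+1, m; rewrite /vO; split=> //; lia.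
case=> [[y [m [hE ->]]]|[y [m [hO ->]]]]; apply/bigcupP.
- rewrite /vE in hE; case: (ltnP m q) => h.
    exists (enc (LB y m)); first by apply/PE_enc; exists (LB y m); split=> //=; lia.
    by rewrite !inE eqxx.
  exists (enc (LV y m)); first by apply/PE_enc; exists (LV y m); split=> //=; lia.
  by rewrite !inE eqxx.
- rewrite /vO in hO; case: (boolP ((y == p) && (m == q))) => h.
    exists (enc (LB y m.-1)); first by apply/PE_enc; exists (LB y m.-1); split=> //=; lia.
    by rewrite !inE (_ : m.-1.+1 = m) ?eqxx ?orbT //; lia.
  exists (enc (LA y m)); first by apply/PE_enc; exists (LA y m); split=> //=; lia.
  by rewrite !inE eqxx.
Qed.


Lemma valid_vE l : valid l -> match l with
  | LA y m => vE y m /\ vO y m | LB y m => vE y m /\ vO y m.+1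
  | LV y m => vE y m /\ vO y.+1 m end.
Proof. by case: l => y m /=; rewrite /vE /vO; split; lia. Qed.

Lemma enc_inj l l' : valid l -> valid l' -> enc l = enc l' -> l = l'.
Proof.
move=> hl hl' E; apply/eqP; rewrite labeqE.
have := valid_vE hl.
case: l hl E => y m /= hl E [h1 h2].
- have := Ev_in_enc hl' h1; have := Ov_in_enc hl' h2.
  rewrite -E !inE !eqxx /= ?orbT => A B; clear E h1 h2.
  case: l' hl' A B => y' m' /= _; case: m hl => [|m]; case: y => [|y] /= hl;
    rewrite ?inE ?in_nil ?labeqE /=; lia.
- have := Ev_in_enc hl' h1; have := Ov_in_enc hl' h2.
  rewrite -E !inE !eqxx /= ?orbT => A B; clear E h1 h2 hl.
  case: l' hl' A B => y' m' /= _; case: y => [|y] /=;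
    rewrite ?inE ?in_nil ?labeqE /=; lia.
- have := Ev_in_enc hl' h1; have := Ov_in_enc hl' h2.
  rewrite -E !inE !eqxx /= ?orbT => A B; clear E h1 h2 hl.
  case: l' hl' A B => y' m' /= _; case: m => [|m] /=;
    rewrite ?inE ?in_nil ?labeqE /=; lia.
Qed.

Lemma deg_count (M : {set {set T}}) v (cands : seq lab) :
  M \subset PE p q -> uniq cands ->
  (forall l, valid l -> (v \in enc l) = (l \in cands)) ->
  #|[set e in M | v \in e]| = count (fun l => valid l && (enc l \in M)) cands.
Proof.
move=> sub uc hc.
set s := [seq enc l | l <- cands & valid l && (enc l \in M)].
have -> : [set e in M | v \in e] = [set x in s].
  apply/setP => e; rewrite !inE; apply/andP/idP.
    case=> eM ve; have /PE_enc[l [hv el]] := subsetP sub e eM.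
    apply/mapP; exists l; last by [].
    by rewrite mem_filter hv -el eM -hc // -el.
  case/mapP=> l; rewrite mem_filter => /andP[/andP[hv hM] hl] ->.
  by rewrite hM hc.
have us : uniq s.
  rewrite map_inj_in_uniq ?filter_uniq // => l l'.
  by rewrite !mem_filter => /andP[/andP[hl _] _] /andP[/andP[hl' _] _]; apply: enc_inj.
by rewrite cardsE (card_uniqP us) size_map size_filter.
Qed.


Definition inM (M : {set {set T}}) l := valid l && (enc l \in M).

Lemma uniq_candE y m : uniq [:: LA y m; LB y m; LV y m].
Proof. by rewrite /= ?in_cons ?in_nil ?labeqE. Qed.

Lemma uniq_candO y m : uniq (candO y m).
Proof. by case: m => [|m]; case: y => [|y]; rewrite /= ?in_cons ?in_nil ?labeqE. Qed.

Lemma perfect_iff M : perfect_matching (PVs p q) (PE p q) M <->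
  [/\ M \subset PE p q,
      (forall y m, vE y m -> inM M (LA y m) + inM M (LB y m) + inM M (LV y m) = 1) &
      (forall y m, vO y m -> count (inM M) (candO y m) = 1)].
Proof.
split.
  case=> sub deg; split=> // y m hv.
    have := deg (Ev y m); rewrite (deg_count sub (uniq_candE y m) (fun l hl => Ev_in_enc hl hv)).
    by rewrite /= addn0 addnA; apply; apply/PVs_char; left; exists y, m.
  have := deg (Ov y m); rewrite (deg_count sub (uniq_candO y m) (fun l hl => Ov_in_enc hl hv)).
  by apply; apply/PVs_char; right; exists y, m.
case=> sub hE hO; split=> // v /PVs_char[[y [m [hv ->]]]|[y [m [hv ->]]]].
  by rewrite (deg_count sub (uniq_candE y m) (fun l hl => Ev_in_enc hl hv)) /= addn0 addnA hE.
by rewrite (deg_count sub (uniq_candO y m) (fun l hl => Ov_in_enc hl hv)) hO.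
Qed.

Definition inMk (k : nat -> nat) (l : lab) : bool :=
  match l with
  | LA y m => (m < k y) || (k y.+1 < m)
  | LB y m => (k y <= m) && (m < k y.+1)
  | LV y m => m == k y.+1
  end.

Definition allL : seq lab :=
  [seq LA y m | y <- iota 0 p.+1, m <- iota 0 q.+1] ++
  [seq LB y m | y <- iota 0 p.+1, m <- iota 0 q.+1] ++
  [seq LV y m | y <- iota 0 p.+1, m <- iota 0 q.+1].

Lemma allL_valid l : valid l -> l \in allL.
Proof.
case: l => y m hv; rewrite /= in hv; rewrite /allL mem_cat.
- by apply/orP; left; apply: allpairs_f; rewrite mem_iota; lia.
- by apply/orP; right; rewrite mem_cat; apply/orP; left; apply: allpairs_f; rewrite mem_iota; lia.
- by apply/orP; right; rewrite mem_cat; apply/orP; right; apply: allpairs_f; rewrite mem_iota; lia.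
Qed.

Definition Mk (k : nat -> nat) : {set {set T}} :=
  [set e | e \in [seq enc l | l <- allL & valid l && inMk k l]].

Lemma Mk_mem k l : valid l -> (enc l \in Mk k) = inMk k l.
Proof.
move=> hl; rewrite inE; apply/mapP/idP.
  case=> l'; rewrite mem_filter => /andP[/andP[hl' hk] _] /(enc_inj hl hl') ->.
  exact: hk.
by move=> hk; exists l => //; rewrite mem_filter hl hk allL_valid.
Qed.

Lemma Mk_sub k : Mk k \subset PE p q.
Proof.
apply/subsetP => e; rewrite inE => /mapP[l]; rewrite mem_filter => /andP[/andP[hl _] _] ->.
by apply/PE_enc; exists l.
Qed.

Lemma inM_Mk k l : inM (Mk k) l = valid l && inMk k l.
Proof. by rewrite /inM; case: (boolP (valid l)) => // hl; rewrite Mk_mem. Qed.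

Definition good (k : nat -> nat) :=
  [/\ k 0 = 0, k p.+1 = q & forall t, t <= p -> k t <= k t.+1].

Lemma good_mono k : good k -> forall s t, s <= t -> t <= p.+1 -> k s <= k t.
Proof.
case=> _ _ hm s t st; elim: t st => [|t IH] st tp.
  by rewrite leqn0 in st; rewrite (eqP st).
case: (ltngtP s t.+1) st => // [h|->] _; last by [].
by apply: leq_trans (IH h (ltnW tp)) (hm t _); lia.
Qed.

Lemma good_le k : good k -> forall t, t <= p.+1 -> k t <= q.
Proof. by move=> g t ht; case: (g) => _ hp1 _; rewrite -hp1; apply: good_mono. Qed.

Lemma Mk_perfect k : good k -> perfect_matching (PVs p q) (PE p q) (Mk k).
Proof.
move=> g; have [k0 kp km] := g.
have kq : forall t, t <= p.+1 -> k t <= q by apply: good_le.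
apply/perfect_iff; split; first exact: Mk_sub.
  move=> y m; rewrite /vE !inM_Mk /= => hv.
  have h1 : k y <= k y.+1. by apply: km; lia.
  have h2 : k y.+1 <= q. by apply: kq; lia.
  case: (eqVneq y 0) => [y0|y0].
    by subst y; rewrite k0 in h1 *; lia.
  case: (eqVneq y p) => [yp|yp].
    by subst y; rewrite kp in h1 h2 *; lia.
  lia.
move=> y m; rewrite /vO => hv.
case: m hv => [|m]; case: y => [|y] hv; rewrite (eq_count (inM_Mk k)) /=.
- lia.
- have h1 : k y.+1 <= k y.+2. by apply: km; lia.
  have h2 : k y.+2 <= q. by apply: kq; lia.
  have h3 : k y <= k y.+1. by apply: km; lia.
  case: (eqVneq y.+1 p) => [yp|yp].
    by rewrite yp kp in h1 h2 *; lia.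
  lia.
- have h1 : k 0 <= k 1. by apply: km; lia.
  have h2 : k 1 <= q. by apply: kq; lia.
  rewrite k0 in h1 *; lia.
- have h1 : k y.+1 <= k y.+2. by apply: km; lia.
  have h2 : k y.+2 <= q. by apply: kq; lia.
  have h3 : k y <= k y.+1. by apply: km; lia.
  case: (eqVneq y.+1 p) => [yp|yp].
    by rewrite yp kp in h1 h2 *; lia.
  lia.
Qed.


Section Classify.
Variable M : {set {set T}}.
Hypothesis HM : perfect_matching (PVs p q) (PE p q) M.

Let w y m := inM M (LV y m).
Let hA y m := inM M (LA y m).
Let hB y m := inM M (LB y m).
Let vd y m := if y == 0 then m == 0 else w y.-1 m.
Let vu y m := if y == p then m == q else w y m.

Definition kM (t : nat) : nat :=
  if t == 0 then 0 else if t <= p then \sum_(m < q.+1) m * inM M (LV t.-1 m) else q.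

Lemma eqO_line y m : y <= p -> m <= q -> ((0 < m) && hB y m.-1) + hA y m + vd y m = 1.
Proof.
case/perfect_iff: HM => sub hE hO hy hm.
case: (boolP ((y == 0) && (m == 0))) => [/andP[/eqP-> /eqP->]|h].
  by rewrite /hA /vd /inM /=.
have := hO y m (ltac:(rewrite /vO; lia)).
rewrite /hA /hB /vd /w.
case: m hm h => [|m]; case: y hy => [|y] hy /=; rewrite ?addn0; lia.
Qed.

Lemma eqE_line y m : y <= p -> m <= q -> hA y m + hB y m + vu y m = 1.
Proof.
case/perfect_iff: HM => sub hE hO hy hm.
case: (boolP ((y == p) && (m == q))) => [/andP[/eqP-> /eqP->]|h].
  by rewrite /hA /hB /vu /inM /= !eqxx /=; lia.
have := hE y m (ltac:(rewrite /vE; lia)).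
rewrite /hA /hB /vu /w.
case: (eqVneq y p) => [yp|yp]; last by [].
by subst y; rewrite /inM /= ltnn /=; lia.
Qed.

Lemma vd_line y : y <= p -> kM y <= q /\ forall m, m <= q -> vd y m = (m == kM y).
Proof.
elim: y => [|y IH] hy.
  by split=> // m hm; rewrite /vd /kM.
have [kq hvd] := IH (ltnW hy).
have hBq : hB y q = false by rewrite /hB /inM /= ltnn andbF.
have [b [/andP[ab bq] hvu _ _]] := line_lemma kq hvd hBq (fun m hm => eqO_line (ltnW hy) hm) (fun m hm => eqE_line (ltnW hy) hm).
have vuw : forall m, vu y m = w y m by move=> m; rewrite /vu (negbTE (_ : y != p)) //; lia.
have kb : kM y.+1 = b.
  rewrite /kM /= hy.
  transitivity (\sum_(i < q.+1) i * (i == b :> nat)); last by rewrite sum_sel ltnS bq.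
  by apply: eq_bigr => i _; rewrite -/(w y i) -vuw hvu // -ltnS.
rewrite kb; split=> // m hm.
by rewrite /vd /= -/(w y m) -vuw hvu.
Qed.

Lemma line_facts y : y <= p -> [/\ kM y <= kM y.+1,
  forall m, m <= q -> hA y m = (m < kM y) || (kM y.+1 < m),
  forall m, m <= q -> hB y m = (kM y <= m) && (m < kM y.+1) &
  forall m, m <= q -> vu y m = (m == kM y.+1)].
Proof.
move=> hy; have [kq hvd] := vd_line hy.
have hBq : hB y q = false by rewrite /hB /inM /= ltnn andbF.
have [b [/andP[ab bq] hvu hAf hBf]] := line_lemma kq hvd hBq
  (fun m hm => eqO_line hy hm) (fun m hm => eqE_line hy hm).
suff -> : kM y.+1 = b by [].
case: (ltnP y p) => yp.
  have [_ hvd'] := vd_line yp.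
  have := hvd' b bq; rewrite /vd /= -/(w y b).
  have -> : w y b = vu y b by rewrite /vu (negbTE (_ : y != p)) //; lia.
  by rewrite hvu // eqxx => /esym/eqP.
have ey : y = p by lia.
have := hvu q (leqnn q); rewrite /vu ey !eqxx => /esym/eqP <-.
by rewrite /kM; case: ifP => //; rewrite ltnn.
Qed.

Lemma kM_good : good kM.
Proof.
split; first by [].
  by rewrite /kM /= ltnn.
by move=> t ht; case: (line_facts ht).
Qed.

Lemma inM_eq l : valid l -> inM M l = inMk kM l.
Proof.
case: l => y m /= hv.
- have hy : y <= p by lia.
  have [_ hAf _ _] := line_facts hy.
  by rewrite -/(hA y m) hAf //; lia.
- have hy : y <= p by lia.
  have [_ _ hBf _] := line_facts hy.
  by rewrite -/(hB y m) hBf //; lia.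
- have hy : y <= p by lia.
  have [_ _ _ hvu] := line_facts hy.
  have hm : m <= q by lia.
  rewrite -/(w y m) -(hvu m hm) /vu (negbTE (_ : y != p)) //; lia.
Qed.

Lemma classify_eq : M = Mk kM.
Proof.
case/perfect_iff: HM => sub _ _.
apply/setP => e; apply/idP/idP => h.
  have /PE_enc [l [hv el]] := subsetP sub e h.
  by rewrite el Mk_mem // -inM_eq // /inM hv -el h.
have /PE_enc [l [hv el]] := subsetP (Mk_sub kM) e h.
by move: h; rewrite el Mk_mem // -inM_eq // /inM hv.
Qed.

End Classify.


Definition Dk (k : nat -> nat) (c : nat * nat) : bool := (0 < c.2) && (k c.1 < c.2).

Inductive mv := MD | MR | MU.

Definition tgt (c : nat * nat) (d : mv) : nat * nat :=
  match d with MD => (c.1.-1, c.2) | MR => (c.1, c.2.+1) | MU => (c.1.+1, c.2.-1) end.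

Definition lbl (c : nat * nat) (d : mv) : lab :=
  match d with MD => LB c.1.-1 c.2.-1 | MR => LV c.1.-1 c.2 | MU => LA c.1 c.2.-1 end.

Definition cellOf (l : lab) : nat * nat :=
  match l with LB y m => (y.+1, m.+1) | LV y m => (y.+1, m) | LA y m => (y, m.+1) end.

Definition mvOf (l : lab) : mv :=
  match l with LB _ _ => MD | LV _ _ => MR | LA _ _ => MU end.

Definition fml k c d :=
  match d with
  | MU => ~~ Dk k c || Dk k (tgt c d)
  | _ => ~~ Dk k c && Dk k (tgt c d)
  end.

Lemma lbl_cellOf l : lbl (cellOf l) (mvOf l) = l.
Proof. by case: l. Qed.

Lemma inMk_fml k l : inMk k l = fml k (cellOf l) (mvOf l).
Proof. case: l => y m; rewrite /fml /Dk /=; lia. Qed.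

Lemma inMk_lbl k c d : 0 < c.1 -> 0 < c.2 -> inMk k (lbl c d) = fml k c d.
Proof. by case: c => r s /= hr hs; rewrite inMk_fml; case: d; rewrite /= ?prednK. Qed.

Lemma inMk_lblR k r : 0 < r -> inMk k (lbl (r, 0) MR) = fml k (r, 0) MR.
Proof. by move=> hr; rewrite inMk_fml /= prednK. Qed.

Definition monoD k c d :=
  match d with MU => Dk k (tgt c d) ==> Dk k c | _ => Dk k c ==> Dk k (tgt c d) end.

Lemma monoD_good k c d : good k -> 0 < c.1 <= p -> monoD k c d.
Proof.
move=> g /andP[h1 h2]; have [k0 kp km] := g.
case: c h1 h2 => r s /= h1 h2; case: d; rewrite /monoD /Dk /=; apply/implyP.
- have : k r.-1 <= k r by apply: (good_mono g); lia.
  lia.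
- lia.
- have : k r <= k r.+1 by apply: km.
  lia.
Qed.

Definition Xs k k' c := Dk k c && ~~ Dk k' c.
Definition Ys k k' c := ~~ Dk k c && Dk k' c.

Lemma fml_wit k k' c d : monoD k c d -> monoD k' c d ->
  (Xs k k' (tgt c d) && ~~ Xs k k' c) || (Ys k k' c && ~~ Ys k k' (tgt c d)) ->
  fml k c d && ~~ fml k' c d.
Proof.
rewrite /Xs /Ys /fml /monoD; move: (tgt c d) => t.
by case: d; move: (Dk k c) (Dk k' c) (Dk k t) (Dk k' t) => [] [] [] [].
Qed.


Definition phi : nat := (q %% 3 == 2).
Definition tau (s : nat) : nat := (s.-1 + phi) %% 3.
Definition r0 : nat := if q %% 3 == 2 then 1 else p.

Definition ptr (c : nat * nat) : mv :=
  match tau c.2 with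
  | 0 => if 1 < c.1 then MD else MR
  | 1 => MR
  | _ => if c.1 < p then MU else MR
  end.

Definition rho (c : nat * nat) : nat :=
  match tau c.2 with
  | 0 => p * c.2.-1 + (p - c.1)
  | 1 => p * c.2.-1 + 2 * c.1.-1
  | _ => p * c.2.-2 + (2 * c.1).-1
  end.

Definition real (c : nat * nat) := (0 < c.1 <= p) && (0 < c.2 <= q).

Lemma tau_lt s : tau s < 3.
Proof. rewrite /tau; lia. Qed.

Lemma tauS s : 0 < s -> tau s.+1 = (tau s).+1 %% 3.
Proof. rewrite /tau /phi; lia. Qed.

Lemma tau_q : tau q != 1.
Proof. rewrite /tau /phi; lia. Qed.

Lemma tau_1 : tau 1 = phi.
Proof. rewrite /tau /phi; lia. Qed.

Lemma mulE n : 0 < n -> p * n = p * n.-1 + p.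
Proof. by move=> hn; rewrite -{1}(prednK hn) mulnS addnC. Qed.

Lemma rho_lt c : real c -> rho c < p * q.
Proof.
case: c => r s; rewrite /real /= => /andP[/andP[r1 r2] /andP[s1 s2]].
have l1 : p * s <= p * q by rewrite leq_mul2l s2 orbT.
have e1 := mulE s1.
rewrite /rho /=; case hT: (tau s) => [|[|t]] /=.
- lia.
- have sq : s < q.
    case: (ltngtP s q) => // h; first lia.
    by move: tau_q; rewrite -h hT.
  have l2 : p * s.+1 <= p * q by rewrite leq_mul2l sq orbT.
  have e2 := mulE (ltn0Sn s); rewrite /= in e2; lia.
- have s2' : 1 < s.
    case: (ltngtP s 1) => // h; first lia.
    by move: hT; rewrite h tau_1 /phi; lia.
  have s3 : 0 < s.-1 by lia.
  have e2 := mulE s3; lia.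
Qed.


Lemma pairE (a b c d : nat) : a = c -> b = d -> (a, b) = (c, d).
Proof. by move=> -> ->. Qed.

Lemma tau_prev s : 1 < s -> tau s = (tau s.-1).+1 %% 3.
Proof. by move=> hs; rewrite -{1}(prednK (ltnW hs)) tauS //; lia. Qed.

Lemma rho_incr c : real c -> real (tgt c (ptr c)) -> rho c < rho (tgt c (ptr c)).
Proof.
case: c => r s; rewrite /real /= => /andP[/andP[r1 r2] /andP[s1 s2]].
have e1 := mulE s1.
rewrite /ptr /=; case hT: (tau s) => [|[|t]] /=.
- case: ifP => h /=; rewrite /rho /= ?hT /=; first lia.
  have ht : tau s.+1 = 1 by rewrite tauS // hT.
  rewrite ht /=; lia.
- have ht : tau s.+1 = 2 by rewrite tauS // hT.
  rewrite /rho /= hT ht /=; lia.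
- have s2' : 1 < s.
    case: (ltngtP s 1) => // h; first lia.
    by move: hT; rewrite h tau_1 /phi; lia.
  have s3 : 0 < s.-1 by lia.
  have e2 := mulE s3.
  case: ifP => h /=.
    have ht : tau s.-1 = 1 by move: (tau_prev s2') (tau_lt s.-1); rewrite hT; lia.
    by rewrite /rho /= hT ht /=; lia.
  have ht : tau s.+1 = 0 by rewrite tauS // hT; move: (tau_lt s); rewrite hT; lia.
  rewrite /rho /= hT ht /=; lia.
Qed.

Lemma rho0 c : real c -> rho c = 0 -> c = (r0, 1).
Proof.
case: c => r s; rewrite /real /= => /andP[/andP[r1 r2] /andP[s1 s2]].
have hz : p * s.-1 = 0 -> s.-1 = 0.
  by move/eqP; rewrite muln_eq0 => /orP[/eqP|/eqP]; lia.
rewrite /rho /= /r0; case hT: (tau s) => [|[|t]] /= h.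
- have s1' : s = 1 by lia.
  move: hT; rewrite s1' tau_1 /phi; case: eqP => // _ _.
  by apply: pairE; lia.
- have s1' : s = 1 by lia.
  move: hT; rewrite s1' tau_1 /phi; case: eqP => // _ _.
  by apply: pairE; lia.
- by move: h; move: (p * s.-2) => u; lia.
Qed.

Lemma rho_pred c : real c -> 0 < rho c ->
  exists2 c', real c' & tgt c' (ptr c') = c /\ rho c' < rho c.
Proof.
case: c => r s; rewrite /real /= => /andP[/andP[r1 r2] /andP[s1 s2]].
have e1 := mulE s1.
have hz : p * s.-1 = 0 -> s.-1 = 0.
  by move/eqP; rewrite muln_eq0 => /orP[/eqP|/eqP]; lia.
rewrite /rho /=; case hT: (tau s) => [|[|t]] /= hpos.
- case: (ltnP r p) => hr.
    exists (r.+1, s); first by rewrite /real /=; lia.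
    by rewrite /ptr /rho /= hT /= ltnS r1 /=; split; [apply: pairE; lia|lia].
  have s2' : 1 < s by lia.
  have s3 : 0 < s.-1 by lia.
  have ht : tau s.-1 = 2 by move: (tau_prev s2') (tau_lt s.-1); rewrite hT; lia.
  have s4 : 1 < s.-1.
    case: (ltngtP s.-1 1) => // h; first lia.
    by move: ht; rewrite h tau_1 /phi; lia.
  have e2 := mulE s3; have s5 : 0 < s.-2 by lia.
  have e3 := mulE s5.
  exists (p, s.-1); first by rewrite /real /=; lia.
  rewrite /ptr /rho /= ht /= ltnn /= prednK //=; split; [apply: pairE; lia|lia].
- case: (ltnP 1 r) => hr.
    have sq : s < q.
      case: (ltngtP s q) => // h; first lia.
      by move: tau_q; rewrite -h hT.
    have ht : tau s.+1 = 2 by rewrite tauS // hT.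
    exists (r.-1, s.+1); first by rewrite /real /=; lia.
    rewrite /ptr /rho /= ht /= (_ : r.-1 < p) /=; last lia.
    by split; [apply: pairE; lia|lia].
  have s2' : 1 < s by lia.
  have ht : tau s.-1 = 0 by move: (tau_prev s2') (tau_lt s.-1); rewrite hT; lia.
  have s3 : 0 < s.-1 by lia.
  have e2 := mulE s3.
  exists (1, s.-1); first by rewrite /real /=; lia.
  rewrite /ptr /rho /= ht /= prednK //=; split; [apply: pairE; lia|lia].
- have s2' : 1 < s.
    case: (ltngtP s 1) => // h; first lia.
    by move: hT; rewrite h tau_1 /phi; lia.
  have ht : tau s.-1 = 1 by move: (tau_prev s2') (tau_lt s.-1); rewrite hT; lia.
  have s3 : 0 < s.-1 by lia.
  have e2 := mulE s3.
  exists (r, s.-1); first by rewrite /real /=; lia.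
  rewrite /ptr /rho /= ht /= prednK //=; split; [apply: pairE; lia|lia].
Qed.


Definition cells : seq (nat * nat) := [seq (r, s) | r <- iota 1 p, s <- iota 1 q].
Definition SL : seq lab := lbl (r0, 0) MR :: [seq lbl c (ptr c) | c <- cells].
Definition Sset : {set {set T}} := [set e | e \in map enc SL].

Lemma mem_cells c : (c \in cells) = real c.
Proof.
case: c => r s; apply/allpairsP/idP => [[[a b] /=]|].
  by rewrite !mem_iota => -[ha hb [-> ->]]; rewrite /real /=; lia.
rewrite /real /= => h; exists (r, s); rewrite /= !mem_iota; split=> //; lia.
Qed.

Lemma r0_ok : 0 < r0 <= p.
Proof. by rewrite /r0; case: ifP; lia. Qed.

Lemma lbl_valid c d : real c -> valid (lbl c d).
Proof. by case: c => r s; rewrite /real /=; case: d => /=; lia. Qed.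

Lemma SL_valid l : l \in SL -> valid l.
Proof.
rewrite inE => /orP[/eqP->|/mapP[c]]; first by have := r0_ok; rewrite /=; lia.
by rewrite mem_cells => hc ->; apply: lbl_valid.
Qed.

Lemma virt_same k k' c : good k -> good k' -> c.1 <= p.+1 -> c.2 <= q.+1 ->
  ~~ real c -> Dk k c = Dk k' c.
Proof.
move=> g g'; have [k0 kp _] := g; have [k0' kp' _] := g'.
case: c => r s /= hr hs; rewrite /real /Dk /= => hc.
case: (eqVneq r 0) => [->|r0']; first by rewrite k0 k0'.
case: (eqVneq r p.+1) => [->|rp]; first by rewrite kp kp'.
have h1 := good_le g hr; have h2 := good_le g' hr; lia.
Qed.

Lemma step_wit k k' c d : good k -> good k' -> real c ->
  (Xs k k' (tgt c d) && ~~ Xs k k' c) || (Ys k k' c && ~~ Ys k k' (tgt c d)) ->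
  inMk k (lbl c d) && ~~ inMk k' (lbl c d).
Proof.
move=> g g' hc h; have [c1 c2] : 0 < c.1 /\ 0 < c.2 by move: hc; rewrite /real; lia.
rewrite !inMk_lbl //; apply: fml_wit => //; apply: monoD_good => //;
  move: hc; rewrite /real; lia.
Qed.

Lemma tgt_bound d c : real c -> (tgt c d).1 <= p.+1 /\ (tgt c d).2 <= q.+1.
Proof. by case: c => r s; rewrite /real /=; case: d => /=; lia. Qed.

Lemma exists_wit k k' : good k -> good k' ->
  (exists c, real c && (Xs k k' c || Ys k k' c)) ->
  exists l, (l \in SL) && inMk k l && ~~ inMk k' l.
Proof.
move=> g g' [c /andP[hc /orP[hX|hY]]].
{ suff : forall n c, real c -> Xs k k' c -> rho c <= n ->
      exists l, (l \in SL) && inMk k l && ~~ inMk k' l by move=> H; exact: (H (rho c) c).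
  elim=> [|n IH] {hc hX} c hc hX hn; case: (posnP (rho c)) => h0.
  - have ec := rho0 hc h0; exists (lbl (r0, 0) MR).
    rewrite in_cons eqxx orTb andTb.
    have /andP[c1 c2] := r0_ok.
    rewrite !inMk_lblR //; apply: fml_wit => //; try (apply: monoD_good => //; lia).
    by rewrite /= -ec hX /Xs /Dk /=.
  - lia.
  - have ec := rho0 hc h0; exists (lbl (r0, 0) MR).
    rewrite in_cons eqxx orTb andTb.
    have /andP[c1 c2] := r0_ok.
    rewrite !inMk_lblR //; apply: fml_wit => //; try (apply: monoD_good => //; lia).
    by rewrite /= -ec hX /Xs /Dk /=.
  - have [c' hc' [ht hlt]] := rho_pred hc h0.
    case: (boolP (Xs k k' c')) => hX'.
      by apply: (IH c') => //; lia.
    exists (lbl c' (ptr c')); rewrite -andbA; apply/andP; split.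
      by rewrite inE; apply/orP; right; apply: map_f; rewrite mem_cells.
    by apply: step_wit => //; rewrite ht hX hX'. }
suff : forall n c, real c -> Ys k k' c -> p * q - rho c <= n ->
    exists l, (l \in SL) && inMk k l && ~~ inMk k' l by move=> H; exact: (H (p * q - rho c) c).
clear hc hY; elim=> [|n IH] z hz hYz hn.
  by have := rho_lt hz; lia.
have hb := tgt_bound (ptr z) hz.
case: (boolP (real (tgt z (ptr z)) && Ys k k' (tgt z (ptr z)))) => ht.
  case/andP: ht => ht1 ht2; have := rho_incr hz ht1; have := rho_lt ht1.
  by move=> h1 h2; apply: (IH _ ht1 ht2); lia.
exists (lbl z (ptr z)); rewrite -andbA; apply/andP; split.
  by rewrite inE; apply/orP; right; apply: map_f; rewrite mem_cells.
apply: step_wit => //; rewrite hYz /=; apply/orP; right.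
move: ht; rewrite negb_and => /orP[hr|//].
rewrite /Ys (virt_same g g') //; [by case: (Dk k' _); rewrite ?andbF | lia | lia].
Qed.


Lemma Mk_ext k k' : (forall t, t <= p.+1 -> k t = k' t) -> Mk k = Mk k'.
Proof.
move=> h; apply/setP => e; rewrite !inE; congr (e \in map enc _).
apply: eq_in_filter => l _; case: (boolP (valid l)) => //= hl.
by case: l hl => y m /= hl; rewrite !h //; lia.
Qed.

Lemma S_CFS : complete_forcing_set (PVs p q) (PE p q) Sset.
Proof.
split.
  apply/subsetP => e; rewrite inE => /mapP[l hl ->]; apply/PE_enc; exists l.
  by split=> //; apply: SL_valid.
move=> M hM; split; first exact: subsetIr.
move=> M' hM' hsub.
have gk := kM_good hM; have gk' := kM_good hM'.
move: hsub; rewrite (classify_eq hM) (classify_eq hM') => hsub.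
set k := kM M in gk hsub *; set k' := kM M' in gk' hsub *.
case: (boolP [forall t : 'I_p, k t.+1 == k' t.+1]) => h.
  apply: Mk_ext => t ht.
  have [k0 kp _] := gk; have [k0' kp' _] := gk'.
  case: (eqVneq t 0) => [->|t0]; first by rewrite k0 k0'.
  case: (eqVneq t p.+1) => [->|tp]; first by rewrite kp kp'.
  have ht' : t.-1 < p by lia.
  by move/forallP/(_ (Ordinal ht'))/eqP: h; rewrite /= prednK //; lia.
exfalso; move/forallPn: h => [i /eqP hi].
have hi' : 0 < i.+1 <= p by rewrite ltn_ord.
have [l /andP[/andP[hl hk] hk']] : exists l, (l \in SL) && inMk k l && ~~ inMk k' l.
  apply: exists_wit => //.
  case: (ltngtP (k i.+1) (k' i.+1)) => hlt; last by [].
  - have h2 : k' i.+1 <= q. by apply: (good_le gk'); lia.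
    by exists (i.+1, (k i.+1).+1); rewrite /real /Xs /Dk /=; lia.
  - have h2 : k i.+1 <= q. by apply: (good_le gk); lia.
    by exists (i.+1, (k' i.+1).+1); rewrite /real /Ys /Dk /=; lia.
have hv := SL_valid hl.
have : enc l \in Mk k' by apply: (subsetP hsub); rewrite in_setI Mk_mem // hk andbT inE map_f.
by rewrite Mk_mem // (negbTE hk').
Qed.


Lemma cellOf_lbl c d : 0 < c.1 -> 0 < c.2 -> cellOf (lbl c d) = c.
Proof. by case: c => r s /= h1 h2; case: d; rewrite /= ?prednK. Qed.

Lemma uniq_cells : uniq cells.
Proof. by apply: allpairs_uniq; rewrite ?iota_uniq // => -[a b] [c d] _ _. Qed.

Lemma S_card : #|Sset| = (p * q).+1.
Proof.
have uSL : uniq SL.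
  rewrite /SL /= map_inj_in_uniq ?uniq_cells ?andbT.
    apply/mapP => -[c hc e]; move: hc; rewrite mem_cells => hc.
    have := congr1 cellOf e; rewrite cellOf_lbl; last by move: hc; rewrite /real; lia.
      by rewrite /= => ec; move: hc; rewrite -ec /real /=; lia.
    by move: hc; rewrite /real; lia.
  move=> c c'; rewrite !mem_cells => hc hc' e.
  have := congr1 cellOf e; rewrite !cellOf_lbl //; move: hc hc'; rewrite /real; lia.
have us : uniq (map enc SL).
  rewrite map_inj_in_uniq // => l l' hl hl'; apply: enc_inj; exact: SL_valid.
rewrite /Sset cardsE (card_uniqP us) size_map /SL /= size_map size_allpairs !size_iota.
by [].
Qed.


Definition kbig (r s t : nat) : nat :=
  if t == 0 then 0 else if t < r then s.-1 else if t <= p then s else q.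
Definition ksmall (r s t : nat) : nat :=
  if t == 0 then 0 else if t <= r then s.-1 else if t <= p then s else q.
Definition kU (t : nat) : nat := if t <= p then 0 else q.
Definition kL (t : nat) : nat := if t == 0 then 0 else q.

Lemma kbig_good r s : 0 < r <= p -> 0 < s <= q -> good (kbig r s).
Proof.
move=> hr hs; split.
- by [].
- by rewrite /kbig /=; case: ifP; [lia|rewrite ltnn].
- by move=> t ht; rewrite /kbig; do ! case: ifP; lia.
Qed.

Lemma ksmall_good r s : 0 < r <= p -> 0 < s <= q -> good (ksmall r s).
Proof.
move=> hr hs; split.
- by [].
- by rewrite /ksmall /=; case: ifP; [lia|rewrite ltnn].
- by move=> t ht; rewrite /ksmall; do ! case: ifP; lia.
Qed.

Lemma kU_good : good kU.
Proof. by split; rewrite /kU //= ?ltnn // => t ht; do ! case: ifP; lia. Qed.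

Lemma kL_good : good kL.
Proof. by split; rewrite /kL //= => t ht; do ! case: ifP; lia. Qed.

Lemma D_small r s c : 0 < r <= p -> 0 < s ->
  Dk (ksmall r s) c = Dk (kbig r s) c || (c == (r, s)).
Proof.
move=> hr hs; case: c => a b; rewrite /Dk /ksmall /kbig /= xpair_eqE.
by do ! case: ifP; lia.
Qed.

Lemma cell_big r s l : 0 < r <= p -> 0 < s <= q ->
  inMk (kbig r s) l -> ~~ inMk (ksmall r s) l -> cellOf l = (r, s).
Proof.
move=> hr hs; rewrite !inMk_fml /fml !D_small; try lia.
have hb : Dk (kbig r s) (r, s) = false by rewrite /Dk /kbig /=; do ! case: ifP; lia.
move: (tgt (cellOf l) (mvOf l)) => t.
case: (eqVneq (cellOf l) (r, s)) => // hc.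
case: (eqVneq t (r, s)) => [->|ht]; rewrite ?hb.
  by case: (mvOf l); rewrite /= ?andbF ?orbT.
by rewrite !orbF; case: (mvOf l) => ->.
Qed.

Lemma cell_UL l : inMk kU l -> ~~ inMk kL l -> ~~ real (cellOf l).
Proof.
rewrite !inMk_fml /fml => h1 h2; apply/negP => hc; move: h1 h2.
have hU : Dk kU (cellOf l) by move: hc; rewrite /real /Dk /kU; case: (cellOf l) => a b /=; case: ifP; lia.
have hL : Dk kL (cellOf l) = false by move: hc; rewrite /real /Dk /kL; case: (cellOf l) => a b /=; case: ifP; lia.
by rewrite hU hL; case: (mvOf l); rewrite /= ?andbF ?orbT.
Qed.



Lemma lower S : complete_forcing_set (PVs p q) (PE p q) S -> (p * q).+1 <= #|S|.
Proof.
case=> sub cfs.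
pose k1 (x : option ('I_p * 'I_q)) :=
  match x with None => kU | Some ij => kbig ij.1.+1 ij.2.+1 end.
pose k2 (x : option ('I_p * 'I_q)) :=
  match x with None => kL | Some ij => ksmall ij.1.+1 ij.2.+1 end.
have g1 : forall x, good (k1 x).
  case=> [[i j]|] /=; last exact: kU_good.
  by apply: kbig_good; have := ltn_ord i; have := ltn_ord j; lia.
have g2 : forall x, good (k2 x).
  case=> [[i j]|] /=; last exact: kL_good.
  by apply: ksmall_good; have := ltn_ord i; have := ltn_ord j; lia.
have diff : forall x, Mk (k1 x) != Mk (k2 x).
  case=> [[i j]|] /=; apply/eqP => E.
    have hv : valid (LV i j.+1) by rewrite /=; have := ltn_ord i; have := ltn_ord j; lia.
    have := Mk_mem (kbig i.+1 j.+1) hv; rewrite E Mk_mem //= /kbig /ksmall /=.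
    by rewrite ltnn leqnn ltn_ord; lia.
  have hv : valid (LV 0 0) by rewrite /=; lia.
  have := Mk_mem kU hv; rewrite E Mk_mem //= /kU /kL /=; case: ifP; lia.
have ex : forall x, exists e, (e \in S) && (e \in Mk (k1 x)) && (e \notin Mk (k2 x)).
  move=> x; have [_ hf] := cfs _ (Mk_perfect (g1 x)).
  case: (boolP (S :&: Mk (k1 x) \subset Mk (k2 x))) => hs.
    by have := hf _ (Mk_perfect (g2 x)) hs => E; move: (diff x); rewrite E eqxx.
  by move/subsetPn: hs => [e he hn]; exists e; move: he; rewrite in_setI => /andP[-> ->]; rewrite hn.
pose f x := odflt set0 [pick e | (e \in S) && (e \in Mk (k1 x)) && (e \notin Mk (k2 x))].
have fP : forall x, (f x \in S) && (f x \in Mk (k1 x)) && (f x \notin Mk (k2 x)).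
  move=> x; rewrite /f; case: pickP => [e he|none] //=.
  by have [e he] := ex x; rewrite none in he.
have cellP : forall x l, valid l -> inMk (k1 x) l -> ~~ inMk (k2 x) l ->
    match x with None => ~~ real (cellOf l) | Some ij => cellOf l = (ij.1.+1, ij.2.+1) end.
  case=> [[i j]|] l hl /=; last exact: cell_UL.
  by apply: cell_big; have := ltn_ord i; have := ltn_ord j; lia.
have finj : injective f.
  move=> x y E.
  have /andP[/andP[hS h1] h2] := fP x; have /andP[/andP[_ h1'] h2'] := fP y.
  rewrite -E in h1' h2'.
  have /PE_enc [l [hl el]] := subsetP sub _ hS.
  rewrite el !Mk_mem // in h1 h2 h1' h2'.
  have cx := cellP x l hl h1 h2; have cy := cellP y l hl h1' h2'.
  move: cx cy; case: x {E h1 h2 hS el} => [[i j]|]; case: y {h1' h2'} => [[i' j']|] //.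
  - move=> -> [ei ej]; congr Some.
    by congr (_, _); apply: val_inj.
  - by move=> ->; rewrite /real /=; have := ltn_ord i; have := ltn_ord j; lia.
  - by move=> h e; move: h; rewrite e /real /=; have := ltn_ord i'; have := ltn_ord j'; lia.
have : f @: [set: option ('I_p * 'I_q)] \subset S.
  by apply/subsetP => e /imsetP[x _ ->]; have /andP[/andP[]] := fP x.
move/subset_leq_card; rewrite card_imset // cardsT card_option card_prod !card_ord.
by [].
Qed.

End Hex.

Theorem mainTheorem8 (p q : nat) (hp : 1 <= p) (hq : 1 <= q) :
  cf_is (PVs p q) (PE p q) (p * q).+1.
Proof.
split; first by exists (Sset p q); split; [exact: S_CFS | exact: S_card].
exact: lower.
Qed.
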